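(* Let $f_0=1,f_1=1,f_2=2,\dots$ be the Fibonacci numbers, let $L$ be a positive integer, and set $p=f_L$, $q=f_{L+1}$. There are absolute constants $c_1,c_2>0$ such that for all integers $v\neq v'$ with $v,v'\in(-c_2q,c_2q)$ we have $\rho_q(pv,pv')>\frac{c_1q}{\max\{|v|,|v'|\}}$. Furthermore, for any $i\in[q]$ and any $t\le L$, there is $v\in\{-f_t,\dots,f_t\}$ such that $\rho_q(i,pv)\le\frac{3q}{f_t}$.
   Context: $\rho_q$ is the Lee metric on $\mathbb{Z}_q$: $\rho_q(a,b)$ is the minimum of $|j|$ over all integers $j$ with $a\equiv b+j\pmod q$. *)

(* Defs.v *)
From mathcomp Require Import all_boot all_order all_algebra.
From mathcomp Require Import reals.
Set Implicit Arguments. Unset Strict Implicit. Unset Printing Implicit Defensive.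
Import Order.TTheory GRing.Theory Num.Theory.
Local Open Scope ring_scope.

Fixpoint fib (n : nat) : nat :=
  match n with
  | 0 => 1
  | 1 => 1
  | (m.+1 as k).+1 => (fib k + fib m)%N
  end.

Definition lee_pred (q a b : int) : pred nat :=
  fun n => (a == b + n%:Z %[mod q])%Z || (a == b - n%:Z %[mod q])%Z.

Lemma lee_ex (q a b : int) : exists n, lee_pred q a b n.
Proof.
exists `|a - b|%N; apply/orP; rewrite /lee_pred abszE.
have [h|h] := lerP 0 (a - b).
- left; rewrite ger0_norm //.
  by have -> : b + (a - b) = a by rewrite addrC subrK.
- right; rewrite ltr0_norm // opprK.
  by have -> : b + (a - b) = a by rewrite addrC subrK.
Qed.

(* Lee metric rho_q(a,b) = min { |j| : j integer, a = b + j (mod q) } *)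
Definition lee (q a b : int) : nat := ex_minn (lee_ex q a b).

(* Main.v *)
Require Import Defs.
From mathcomp Require Import all_boot all_order all_algebra.
From mathcomp Require Import reals.
From mathcomp Require Import zify ring lra.
Import Order.TTheory GRing.Theory Num.Theory.
Local Open Scope ring_scope.

Fixpoint F (n : nat) : nat :=
  match n with
  | 0 => 0
  | 1 => 1
  | (m.+1 as k).+1 => (F k + F m)%N
  end.

Lemma FS n : F n.+2 = (F n.+1 + F n)%N. Proof. by []. Qed.

Lemma fibE n : fib n = F n.+1.
Proof.
suff : fib n = F n.+1 /\ fib n.+1 = F n.+2 by case.
elim: n => [|n [IH1 IH2]] //. split=> //.
rewrite FS -IH1 -IH2. case: n {IH1 IH2} => //= n.
Qed.

Definition Fz n : int := (F n)%:Z.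
Lemma FzS n : Fz n.+2 = Fz n.+1 + Fz n. Proof. by rewrite /Fz FS PoszD. Qed.
Lemma Fz0 : Fz 0 = 0. Proof. by []. Qed.
Lemma Fz1 : Fz 1 = 1. Proof. by []. Qed.

Lemma Fadd a b : Fz (a + b).+1 = Fz a.+1 * Fz b.+1 + Fz a * Fz b.
Proof.
elim: a b => [|a IH] b.
  by rewrite add0n Fz0 Fz1; ring.
have -> : (a.+1 + b).+1 = (a + b.+1).+1 by lia.
rewrite IH !FzS; ring.
Qed.

Lemma FG i c : Fz (i + c).+1 * Fz i.+1 - Fz (i + c).+2 * Fz i = (-1) ^+ i * Fz c.+1.
Proof.
elim: i => [|i IH].
  by rewrite Fz0 add0n Fz1; ring.
rewrite exprS -mulrA -IH.
have -> : (i.+1 + c).+1 = (i + c).+2 by lia.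
rewrite [Fz (i + c).+3]FzS [Fz i.+2]FzS; ring.
Qed.

Lemma Fge0 n : 0 <= Fz n. Proof. by []. Qed.

Lemma Fpos n : 0 < Fz n.+1.
Proof.
case: n => // n. elim: n => // n IH. rewrite FzS. have := Fge0 n.+1. lia.
Qed.


Lemma Fmono n : Fz n <= Fz n.+1.
Proof. case: n => // n. rewrite FzS. have := Fge0 n. lia. Qed.

Lemma Fmono2 n m : (n <= m)%N -> Fz n <= Fz m.
Proof.
move=> /subnK <-. elim: (m - n)%N => // k IH. rewrite addSn.
exact: le_trans IH (Fmono _).
Qed.

Lemma FGm i m : (i <= m)%N ->
  Fz m * Fz i.+1 - Fz m.+1 * Fz i = (-1) ^+ i * Fz (m - i).
Proof.
move=> him. case: (ltnP i m) => h.
  have -> : m = (i + (m - i).-1).+1 by lia.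
  have -> : ((i + (m - i).-1).+1 - i)%N = (m - i).-1.+1 by lia.
  by rewrite -FG; congr (_ * _ - _ * _); congr Fz; lia.
have -> : m = i by lia.
rewrite subnn Fz0; ring.
Qed.
Lemma find_i m (x : int) : 1 <= x -> x < Fz m.+1 ->
  exists2 i, (i < m)%N & Fz i.+1 <= x < Fz i.+2.
Proof.
elim: m => [|m IH] h1 h2; first by rewrite Fz1 in h2; lia.
case: (ltP x (Fz m.+1)) => h.
  by case: (IH h1 h) => i hi hh; exists i => //; lia.
by exists m => //; apply/andP; split.
Qed.

Lemma sign_cases i : (-1) ^+ i = 1 :> int \/ (-1) ^+ i = -1 :> int.
Proof. rewrite -signr_odd; case: odd; [right|left]; by rewrite ?expr1 ?expr0. Qed.

Lemma mge (x y : int) : 0 < x -> 0 <= y -> y <= x * y.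
Proof. move=> h1 h2. have h1' : 1 <= x by lia. have := ler_wpM2r h2 h1'. by rewrite mul1r. Qed.
Lemma mle (x y : int) : x < 0 -> 0 <= y -> x * y <= - y.
Proof. move=> h1 h2. have h1' : 0 < - x by lia. have := mge _ _ h1' h2. rewrite mulNr. lia. Qed.

Lemma sign_lemma (a b A B al be w : int) : w = a * A + b * B -> 1 <= A -> 1 <= B ->
  0 < `|w| -> `|w| < B -> 0 <= be -> be <= al -> 1 <= al -> al <= `|a * al - b * be|.
Proof.
move=> hw hA hB h0 hwB hb0 hba ha1.
have hA0 : 0 <= A by lia. have hB0 : 0 <= B by lia. have hal0 : 0 <= al by lia.
case: (ltgtP a 0) => ha; case: (ltgtP b 0) => hb.
- have h1 := mle _ _ hb hB0. have h2 := mle _ _ ha hA0.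
  move: hwB; rewrite hw; lia.
- have h1 := mge _ _ hb hb0. have h2 := mle _ _ ha hal0.
  have h3 := mle _ _ ha hA0. lia.
- rewrite hb mul0r subr0. have h2 := mle _ _ ha hal0. lia.
- have h1 := mle _ _ hb hb0. have h2 := mge _ _ ha hal0. lia.
- have h1 := mge _ _ hb hB0. have h2 := mge _ _ ha hA0.
  move: hwB; rewrite hw; lia.
- rewrite hb mul0r subr0. have h2 := mge _ _ ha hal0. lia.
- have h1 := mle _ _ hb hB0. move: hwB h0; rewrite hw ha mul0r add0r. lia.
- have h1 := mge _ _ hb hB0. move: hwB h0; rewrite hw ha mul0r add0r. lia.
- move: h0; rewrite hw ha hb !mul0r addr0. lia.
Qed.

Lemma coreA m (w r k : int) : (1 <= m)%N -> r = Fz m * w + k * Fz m.+1 ->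
  0 < `|w| < Fz m.+1 -> Fz m.+1 <= 3 * `|w| * `|r|.
Proof.
move=> hm hr /andP [hw0 hwq].
have hw1 : 1 <= `|w| by lia.
have [i him /andP [hAi hBi]] := find_i m `|w| hw1 hwq.
have [c hc] : exists c, m = (i + c).+1 by exists (m - i.+1)%N; lia.
subst m.
set A := Fz i.+1. set B := Fz i.+2. set s := (-1) ^+ i : int.
have cas : A * A - B * Fz i = s.
  by have := FG i 0; rewrite addn0 Fz1 mulr1.
have hp : Fz (i + c).+1 = A * Fz c.+1 + Fz i * Fz c by rewrite Fadd.
have hq : Fz (i + c).+2 = B * Fz c.+1 + A * Fz c.
  by rewrite /A /B -Fadd; congr Fz; lia.
have ss : s * s = 1 by rewrite /s -exprMn mulrNN mulr1 expr1n.
set a := s * (w * A + k * B). set b := - s * (w * Fz i + k * A).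
have hw : w = a * A + b * B.
  have -> : a * A + b * B = s * w * (A * A - B * Fz i) by rewrite /a /b; ring.
  by rewrite cas mulrAC ss mul1r.
have hr' : s * r = a * Fz c.+1 - b * Fz c.
  rewrite hr hp hq /a /b.
  ring.
have hAp : 1 <= A := Fpos i.
have hBA : B <= 2 * A by rewrite /B FzS; have := Fmono i; lia.
have hal : 1 <= Fz c.+1 := Fpos c.
have hbe : Fz c <= Fz c.+1 := Fmono c.
have hbe0 : 0 <= Fz c := Fge0 c.
have habs : `|s * r| = `|r| by rewrite normrM /s normrX normrN1 expr1n mul1r.
have hra : Fz c.+1 <= `|r|.
  rewrite -habs hr'.
  have hBp : 1 <= B by rewrite /B; exact: Fpos.
  exact: (sign_lemma _ _ _ _ _ _ _ hw hAp hBp hw0 hBi hbe0 hbe hal).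
have hAw : A <= `|w| := hAi.
have e1 : A * Fz c.+1 <= `|w| * `|r| by apply: ler_pM => //; lia.
have e2 : B * Fz c.+1 <= 2 * A * Fz c.+1 by apply: ler_wpM2r; lia.
have e3 : A * Fz c <= A * Fz c.+1 by apply: ler_wpM2l; lia.
rewrite hq. lia.
Qed.

Lemma coreB m i (I : int) : (i < m)%N -> exists v s K : int,
  `|v| < Fz i.+3 /\ Fz i.+3 * `|s| <= 3 * Fz m.+1 /\ I = Fz m * v + s + K * Fz m.+1.
Proof.
move=> him.
have hGB := FGm (i.+1) m him.
have [c hc] : exists c, m = (i + c).+1 by exists (m - i.+1)%N; lia.
have hmc : (m - i.+1)%N = c by lia.
rewrite hmc in hGB. subst m.
have hGA := FG i c.
set A := Fz i.+1 in hGA hGB *. set B := Fz i.+2 in hGA hGB *.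
set p := Fz (i + c).+1 in hGA hGB *. set q := Fz (i + c).+2 in hGA hGB *.
set s := (-1) ^+ i : int in hGA.
rewrite exprS -/s in hGB.
have hq : q = B * Fz c.+1 + A * Fz c.
  by rewrite /A /B /q -Fadd; congr Fz; lia.
have ss : s * s = 1 by rewrite /s -exprMn mulrNN mulr1 expr1n.
have qp : 0 < q by apply: Fpos.
set x1 := s * I * B. set x2 := - s * I * A.
have d1 := divz_eq x1 q. have d2 := divz_eq x2 q.
set a := (x1 %/ q)%Z in d1. set R1 := (x1 %% q)%Z in d1.
set b := (x2 %/ q)%Z in d2. set R2 := (x2 %% q)%Z in d2.
have qn : q != 0 by lia.
have R1b : 0 <= R1 < q by rewrite modz_ge0 // ltz_pmod.
have R2b : 0 <= R2 < q by rewrite modz_ge0 // ltz_pmod.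
have hAp : 0 < A := Fpos i.
have hBA : A <= B := Fmono i.+1.
have hal : 0 < Fz c.+1 := Fpos c.
have hbe : Fz c <= Fz c.+1 := Fmono c.
have hbe0 : 0 <= Fz c := Fge0 c.
have hF3 : Fz i.+3 = B + A by rewrite FzS.
exists (a * A + b * B), (I - s * (a * Fz c.+1 - b * Fz c)), (- (a * Fz i + b * Fz i.+1)).
split; [|split].
- have e : q * (a * A + b * B) = - (A * R1 + B * R2).
    have -> : q * (a * A + b * B) = (a * q) * A + (b * q) * B by ring.
    have -> : a * q = x1 - R1 by rewrite d1; ring.
    have -> : b * q = x2 - R2 by rewrite d2; ring.
    rewrite /x1 /x2; ring.
  have e2 : q * `|a * A + b * B| < q * Fz i.+3.
    have -> : q * `|a * A + b * B| = `|q * (a * A + b * B)| by rewrite normrM gtr0_norm.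
    rewrite e normrN hF3.
    have f1 : A * R1 < A * q by rewrite ltr_pM2l //; lia.
    have f2 : B * R2 < B * q by rewrite ltr_pM2l //; lia.
    have f3 : 0 <= A * R1 by apply: mulr_ge0; lia.
    have f4 : 0 <= B * R2 by apply: mulr_ge0; lia.
    rewrite ger0_norm; last by lia.
    have -> : q * (B + A) = B * q + A * q by ring.
    lia.
  by rewrite ltr_pM2l in e2.
- set sr := I - _.
  have e : q * sr = s * (R1 * Fz c.+1 - R2 * Fz c).
    have -> : q * sr = q * I - s * ((a * q) * Fz c.+1 - (b * q) * Fz c) by rewrite /sr; ring.
    have -> : a * q = x1 - R1 by rewrite d1; ring.
    have -> : b * q = x2 - R2 by rewrite d2; ring.
    have -> : q * I - s * ((x1 - R1) * Fz c.+1 - (x2 - R2) * Fz c)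
       = q * I - (s * s) * I * (B * Fz c.+1 + A * Fz c) + s * (R1 * Fz c.+1 - R2 * Fz c).
      rewrite /x1 /x2; ring.
    rewrite ss -hq; ring.
  have e2 : q * `|sr| < q * Fz c.+1.
    have -> : q * `|sr| = `|q * sr| by rewrite normrM gtr0_norm.
    rewrite e normrM /s normrX normrN1 expr1n mul1r.
    have f1 : R1 * Fz c.+1 < q * Fz c.+1 by rewrite ltr_pM2r //; lia.
    have f2 : R2 * Fz c <= R2 * Fz c.+1 by apply: ler_wpM2l; lia.
    have f2' : R2 * Fz c.+1 < q * Fz c.+1 by rewrite ltr_pM2r //; lia.
    have f3 : 0 <= R1 * Fz c.+1 by apply: mulr_ge0; lia.
    have f4 : 0 <= R2 * Fz c by apply: mulr_ge0; lia.
    rewrite ltr_norml; apply/andP; split; lia.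
  rewrite ltr_pM2l // in e2.
  have g1 : Fz i.+3 * `|sr| <= Fz i.+3 * Fz c.+1.
    by apply: ler_wpM2l; [lia | lia].
  have g2 : Fz i.+3 * Fz c.+1 <= 3 * A * Fz c.+1.
    apply: ler_wpM2r; first lia.
    have : B <= 2 * A by rewrite /B FzS; have := Fmono i; lia.
    lia.
  have g3 : A * Fz c.+1 <= B * Fz c.+1 by apply: ler_wpM2r; lia.
  have g4 : 0 <= A * Fz c by apply: mulr_ge0; lia.
  rewrite -/q hq. lia.
- have -> : - (a * Fz i + b * Fz i.+1) * q =
     - (a * Fz i + b * Fz i.+1) * q - a * (p * A - q * Fz i - s * Fz c.+1)
     - b * (p * B - q * A - - s * Fz c) by rewrite hGA hGB; ring.
  ring.
Qed.

Lemma lee_min (q a b : int) n : lee_pred q a b n -> (lee q a b <= n)%N.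
Proof. rewrite /lee; case: ex_minnP => k _ h; exact: h. Qed.

Lemma lee_self (q a b : int) : lee_pred q a b (lee q a b).
Proof. rewrite /lee; by case: ex_minnP. Qed.

Lemma lee_of (q x y s K : int) : x = y + s + K * q -> lee_pred q x y `|s|%N.
Proof.
move=> e; rewrite /lee_pred; apply/orP.
have [hs|hs] := lerP 0 s.
- left; rewrite eqz_mod_dvd; apply/dvdzP; exists K.
  rewrite e gez0_abs //; ring.
- right; rewrite eqz_mod_dvd; apply/dvdzP; exists K.
  rewrite e ltz0_abs //; ring.
Qed.

Lemma lee_to (q x y : int) n : lee_pred q x y n -> exists r K : int,
  x = y + r + K * q /\ `|r| = n%:Z.
Proof.
rewrite /lee_pred => /orP [] /eqP h.
- have : (q %| x - (y + n%:Z))%Z by rewrite -eqz_mod_dvd; apply/eqP.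
  case/dvdzP => K hK; exists n%:Z, K; split; last by [].
  by rewrite -hK; ring.
- have : (q %| x - (y - n%:Z))%Z by rewrite -eqz_mod_dvd; apply/eqP.
  case/dvdzP => K hK; exists (- n%:Z), K; split; last by rewrite normrN.
  by rewrite -hK; ring.
Qed.

Lemma fibz n : (fib n)%:Z = Fz n.+1. Proof. by rewrite fibE. Qed.

Lemma nat_intR (R : realType) (n : nat) : n%:R = (n%:Z)%:~R :> R.
Proof. by []. Qed.

Theorem lemma56 (R : realType) :
  (exists c1 c2 : R, 0 < c1 /\ 0 < c2 /\
    forall L : nat, (0 < L)%N ->
    forall v v' : int, v != v' ->
      `|v|%:~R < c2 * (fib L.+1)%:R ->
      `|v'|%:~R < c2 * (fib L.+1)%:R ->
      c1 * (fib L.+1)%:R / (Num.max `|v| `|v'|)%:~R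
        < (lee (fib L.+1)%:Z ((fib L)%:Z * v) ((fib L)%:Z * v'))%:R)
  /\
  (forall L : nat, (0 < L)%N ->
   forall i : nat, (1 <= i <= fib L.+1)%N ->
   forall t : nat, (t <= L)%N ->
   exists v : int, - (fib t)%:Z <= v <= (fib t)%:Z /\
     (lee (fib L.+1)%:Z i%:Z ((fib L)%:Z * v))%:R
       <= 3 * (fib L.+1)%:R / (fib t)%:R :> R).
Proof.
split.
  exists (1/7), (1/2); split; first lra. split; first lra.
  move=> L hL v v' hvv' hv hv'.
  rewrite nat_intR fibz in hv hv' *.
  rewrite !fibz.
  set q := Fz L.+2 in hv hv' *. set p := Fz L.+1.
  have hv2 : 2 * `|v| < q.
    rewrite -(ltr_int R) intrM. lra.
  have hv2' : 2 * `|v'| < q.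
    rewrite -(ltr_int R) intrM. lra.
  set n := lee q (p * v) (p * v').
  have [r [K [e hr]]] := lee_to _ _ _ _ (lee_self q (p * v) (p * v')).
  rewrite -/n in hr.
  have hw : 0 < `|v - v'| < q.
    apply/andP; split; first by rewrite normr_gt0 subr_eq0.
    have := ler_normB v v'. lia.
  have := coreA L.+1 (v - v') r (- K) isT _ hw.
  have e' : r = p * (v - v') + - K * q by rewrite mulrBr e; ring.
  move=> /(_ e') hA.
  set M := Num.max `|v| `|v'|.
  have hM1 : `|v| <= M by rewrite le_max lexx.
  have hM2 : `|v'| <= M by rewrite le_max lexx orbT.
  have hMp : 0 < M.
    have : 0 < `|v - v'| by case/andP: hw.
    have := ler_normB v v'. lia.
  rewrite hr in hA.
  have hwM : `|v - v'| * n%:Z <= (2 * M) * n%:Z.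
    apply: ler_wpM2r => //. have := ler_normB v v'. lia.
  have hq0 : 0 < q by apply: Fpos.
  have key : q < 7 * (M * n%:Z).
    have : q <= 6 * (M * n%:Z).
      have -> : 6 * (M * n%:Z) = 3 * ((2 * M) * n%:Z) by ring.
      have e3 : 3 * `|v - v'| * n%:Z = 3 * (`|v - v'| * n%:Z) by ring.
      rewrite e3 in hA.
      lia.
    lia.
  rewrite ltr_pdivrMr; last by rewrite ltr0z.
  rewrite nat_intR.
  move: key; rewrite -(ltr_int R) !intrM => key.
  lra.
move=> L hL i hi t ht.
have hq0 : 0 < Fz L.+2 by apply: Fpos.
have hqR : (fib L.+1)%:R = (Fz L.+2)%:~R :> R by rewrite nat_intR fibz.
rewrite hqR !fibz.
set q := Fz L.+2 in hq0 *. set p := Fz L.+1.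
case: (ltnP t 2) => ht2.
  have ft : fib t = 1%N by case: t ht ht2 => [|[|]].
  have fz : Fz t.+1 = 1 by rewrite -fibz ft.
  rewrite ft fz. exists 0; split; first by [].
  have := lee_of q i%:Z (p * 0) i%:Z 0.
  move=> /(_ _) /lee_min; rewrite absz_nat => h.
  have {}h := h ltac:(ring).
  rewrite divr1.
  apply: le_trans (_ : i%:R <= _); first by rewrite ler_nat.
  have : (i <= fib L.+1)%N by case/andP: hi.
  rewrite -(ler_nat R) hqR => h2. have : (0 : R) <= (fib L.+1)%:R by []. lra.
have [j hj] : exists j, t = j.+2 by exists (t - 2)%N; lia.
subst t.
have [v [s [K [hv [hs e]]]]] := coreB L.+1 j i%:Z ltac:(lia).
exists v; split.
  lia.
have h := lee_min _ _ _ _ (lee_of _ _ _ _ _ e).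
rewrite ler_pdivlMr; last by rewrite ltr0n -(ltz_nat 0) fibz; exact: Fpos.
have h1 : (lee q i (p * v) * fib j.+2 <= `|s| * fib j.+2)%N by apply: leq_mul.
have h2 : (`|s| * fib j.+2)%N%:Z <= 3 * q.
  rewrite PoszM fibz abszE mulrC. exact: hs.
rewrite -natrM nat_intR.
have : (lee q i (p * v) * fib j.+2)%N%:Z <= 3 * q by apply: le_trans h2; rewrite lez_nat.
rewrite -(ler_int R) intrM => h3.
exact: h3.
Qed.
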